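(* In the setting described in the context, let $\sigma_w,\sigma_v$ be real scalars and let $\Pi_\tau(s)=W^{1/2}\tilde\Sigma_\tau(s)$, where $$\tilde\Sigma_\tau(s)=R^T\big(sI+L_{e,s}^\tau RWR^T\big)^{-1}\begin{bmatrix}\sigma_wD_\tau^TE^{-1/2} & -\sigma_vL_{e,s}^\tau RW^{1/2}\end{bmatrix}.$$ Then $$\|\Pi_\tau\|_\infty^2=\sigma_w^2\,\bar\sigma(X)+\sigma_v^2,\qquad X=W^{1/2}R^T\big(RWR^TL_{e,s}^\tau RWR^T\big)^{-1}RW^{1/2}.$$
   Context: Let $\mathcal G$ be an undirected, connected graph without self-loops, with node set $\{1,\dots,n\}$ ($n\ge2$) and edge set $\mathcal E$, $m=|\mathcal E|$. Give each edge an arbitrary orientation; the incidence matrix $D\in\mathbb R^{n\times m}$ has $D_{il}=1$ if node $i$ is the initial node of edge $l$, $-1$ if it is the terminal node, and $0$ otherwise. Fix a spanning tree $\mathcal G_\tau$ and order the edges so the first $n-1$ are tree edges; write $D=[D_\tau\ D_c]$ with $D_\tau\in\mathbb R^{n\times(n-1)}$. Set $T_\tau^c=(D_\tau^TD_\tau)^{-1}D_\tau^TD_c$ and $R=[I_{n-1}\ T_\tau^c]\in\mathbb R^{(n-1)\times m}$. Let $W=\mathrm{diag}(w_1,\dots,w_m)$, $w_l>0$, and $E=\mathrm{diag}(\epsilon_1,\dots,\epsilon_n)$, $\epsilon_i>0$; powers of these diagonal matrices are taken entrywise. Define $L_{e,s}^\tau=D_\tau^TE^{-1}D_\tau$. For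 a stable transfer matrix $\Phi(s)$, $\|\Phi\|_\infty=\sup_{\omega\in\mathbb R}\bar\sigma(\Phi(j\omega))$ where $\bar\sigma$ is the largest singular value. *)

(* Defs.v *)
From HB Require Import structures.
From mathcomp Require Import all_boot all_order all_algebra.
From mathcomp Require Import all_classical all_reals all_analysis.
From mathcomp Require Import complex.
Set Implicit Arguments. Unset Strict Implicit. Unset Printing Implicit Defensive.
Import Order.TTheory GRing.Theory Num.Theory.
Local Open Scope ring_scope.
Local Open Scope classical_set_scope.

Definition simple_edges n m (src tgt : 'I_m -> 'I_n) : Prop :=
  (forall l, src l != tgt l) /\
  (forall l l', (src l == src l' /\ tgt l == tgt l') \/ (src l == tgt l' /\ tgt l == src l') -> l = l').

Definition adj_in n m (src tgt : 'I_m -> 'I_n) (S : pred 'I_m) : rel 'I_n :=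
  fun x y => [exists l : 'I_m, S l && (((src l == x) && (tgt l == y)) || ((src l == y) && (tgt l == x)))].

(* The edges in S form a spanning tree of the node set 'I_n : they connect all
   nodes and there are exactly n-1 of them (i.e. a connected subgraph on all
   nodes with n-1 edges, which is the same as a spanning tree). *)
Definition spanning_tree n m (src tgt : 'I_m -> 'I_n) (S : pred 'I_m) : Prop :=
  (forall x y : 'I_n, connect (adj_in src tgt S) x y) /\ #|S| = n.-1.

Definition graph_connected n m (src tgt : 'I_m -> 'I_n) : Prop :=
  forall x y : 'I_n, connect (adj_in src tgt predT) x y.

Definition incidence (R : ringType) n m (src tgt : 'I_m -> 'I_n) : 'M[R]_(n, m) :=
  \matrix_(i, l) (if src l == i then 1 else if tgt l == i then -1 else 0).

Definition first_edges p k : pred 'I_(p + k) := fun l => (l < p)%N.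

Section Mats.
Variable R : realType.
Variables n k : nat.
Local Notation m := (n.-1 + k)%N.

Definition Dtau (D : 'M[R]_(n, m)) : 'M[R]_(n, n.-1) := lsubmx D.
Definition Dc (D : 'M[R]_(n, m)) : 'M[R]_(n, k) := rsubmx D.
Definition Ttauc (D : 'M[R]_(n, m)) : 'M[R]_(n.-1, k) :=
  invmx ((Dtau D)^T *m Dtau D) *m (Dtau D)^T *m Dc D.
Definition Rmat (D : 'M[R]_(n, m)) : 'M[R]_(n.-1, m) := row_mx 1%:M (Ttauc D).

Definition diagf p (f : 'I_p -> R) : 'M[R]_p := diag_mx (\row_i f i).
Definition Wm (w : 'I_m -> R) := diagf w.
Definition Wsqrt (w : 'I_m -> R) := diagf (fun l => Num.sqrt (w l)).
Definition Einv (eps : 'I_n -> R) := diagf (fun i => (eps i)^-1).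
Definition Einvsqrt (eps : 'I_n -> R) := diagf (fun i => (Num.sqrt (eps i))^-1).

Definition Les (D : 'M[R]_(n, m)) (eps : 'I_n -> R) : 'M[R]_(n.-1) :=
  (Dtau D)^T *m Einv eps *m Dtau D.

Definition Xmat (D : 'M[R]_(n, m)) w eps : 'M[R]_m :=
  let Rm := Rmat D in
  Wsqrt w *m Rm^T
    *m invmx (Rm *m Wm w *m Rm^T *m Les D eps *m Rm *m Wm w *m Rm^T)
    *m Rm *m Wsqrt w.

Local Open Scope complex_scope.
Definition toC p q (A : 'M[R]_(p, q)) : 'M[R[i]]_(p, q) := map_mx (fun r => r%:C) A.

Definition Pitau (D : 'M[R]_(n, m)) w eps (sw sv : R) (s : R[i]) : 'M[R[i]]_(m, n + m) :=
  let Rm := Rmat D in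
  toC (Wsqrt w *m Rm^T)
    *m invmx (s%:M + toC (Les D eps *m Rm *m Wm w *m Rm^T))
    *m row_mx (toC (sw *: ((Dtau D)^T *m Einvsqrt eps)))
              (toC (- sv *: (Les D eps *m Rm *m Wsqrt w))).
End Mats.

Section Norms.
Variable R : realType.
Local Open Scope complex_scope.

Definition vnorm2 p (x : 'cV[R[i]]_p) : R :=
  \sum_i (complex.Re (x i 0) ^+ 2 + complex.Im (x i 0) ^+ 2).

(* largest singular value = induced Euclidean (spectral) norm *)
Definition sigma_max p q (A : 'M[R[i]]_(p, q)) : R :=
  sup [set Num.sqrt (vnorm2 (A *m x)) | x in [set x : 'cV[R[i]]_q | vnorm2 x = 1]].

Definition hinf_norm p q (Phi : R[i] -> 'M[R[i]]_(p, q)) : \bar R :=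
  ereal_sup [set (sigma_max (Phi ((0 : R) +i* w)))%:E | w in [set: R]].
End Norms.

(* Main.v *)
Require Import Defs.
From HB Require Import structures.
From mathcomp Require Import all_boot all_order all_algebra.
From mathcomp Require Import all_classical all_reals all_analysis.
From mathcomp Require Import complex.
From mathcomp Require Import ring lra zify.
Set Implicit Arguments. Unset Strict Implicit. Unset Printing Implicit Defensive.
Import Order.TTheory GRing.Theory Num.Theory.
Local Open Scope ring_scope.

Section CLin.
Variable R : realType.
Local Notation C := R[i].

Definition hc p q (A : 'M[C]_(p,q)) : 'M[C]_(q,p) := map_mx (@conjc R) A^T.
Lemma conjcKK (z : C) : conjc (conjc z) = z.
Proof. by case: z => a b /=; rewrite opprK. Qed.

Definition ip p (x y : 'cV[C]_p) : C := \sum_i conjc (x i 0) * y i 0.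

Lemma vnorm2C p (x : 'cV[C]_p) : (vnorm2 x)%:C%C = ip x x.
Proof.
rewrite /vnorm2 /ip rmorph_sum; apply: eq_bigr => i _ /=.

by rewrite add_Re2_Im2 sqr_normc mulrC.
Qed.

Lemma ip_ge0 p (x : 'cV[C]_p) : 0 <= ip x x.
Proof. by apply: sumr_ge0 => i _; rewrite mulrC mulcJ_ge0. Qed.

Lemma vnorm2_ge0 p (x : 'cV[C]_p) : 0 <= vnorm2 x.
Proof. by rewrite -lecR vnorm2C ip_ge0. Qed.

Lemma ip_mx p (x y : 'cV[C]_p) : ip x y = (hc x *m y) 0 0.
Proof. by rewrite mxE; apply: eq_bigr => i _; rewrite !mxE. Qed.

Lemma hc_mul p q r (A : 'M[C]_(p,q)) (B : 'M[C]_(q,r)) : hc (A *m B) = hc B *m hc A.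
Proof. by rewrite /hc trmx_mul map_mxM. Qed.

Lemma hcK p q (A : 'M[C]_(p,q)) : hc (hc A) = A.
Proof. by apply/matrixP => i j; rewrite !mxE; case: (A i j) => a b /=; rewrite opprK. Qed.

Lemma hcD p q (A B : 'M[C]_(p,q)) : hc (A + B) = hc A + hc B.
Proof. by apply/matrixP => i j; rewrite !mxE rmorphD. Qed.

Lemma ip_adj p q (A : 'M[C]_(p,q)) x y : ip x (A *m y) = ip (hc A *m x) y.
Proof. by rewrite !ip_mx hc_mul hcK mulmxA. Qed.

Lemma ipC p (x y : 'cV[C]_p) : ip y x = conjc (ip x y).
Proof.
rewrite /ip rmorph_sum; apply: eq_bigr => i _.
by rewrite rmorphM /= conjcKK mulrC.
Qed.

Lemma ipDr p (x y z : 'cV[C]_p) : ip x (y + z) = ip x y + ip x z.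
Proof. by rewrite /ip -big_split; apply: eq_bigr => i _; rewrite mxE mulrDr. Qed.

Lemma ipDl p (x y z : 'cV[C]_p) : ip (y + z) x = ip y x + ip z x.
Proof. by rewrite /ip -big_split; apply: eq_bigr => i _; rewrite mxE rmorphD mulrDl. Qed.

Lemma ipZr p (x y : 'cV[C]_p) a : ip x (a *: y) = a * ip x y.
Proof. by rewrite /ip mulr_sumr; apply: eq_bigr => i _; rewrite mxE mulrCA. Qed.

Lemma ipZl p (x y : 'cV[C]_p) a : ip (a *: x) y = conjc a * ip x y.
Proof. by rewrite /ip mulr_sumr; apply: eq_bigr => i _; rewrite mxE rmorphM mulrA. Qed.

Lemma ipNr p (x y : 'cV[C]_p) : ip x (- y) = - ip x y.
Proof. by rewrite -scaleN1r ipZr mulN1r. Qed.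

Lemma ipNl p (x y : 'cV[C]_p) : ip (- x) y = - ip x y.
Proof. by rewrite -scaleN1r ipZl rmorphN rmorph1 mulN1r. Qed.

Lemma ipBr p (x y z : 'cV[C]_p) : ip x (y - z) = ip x y - ip x z.
Proof. by rewrite ipDr ipNr. Qed.

Lemma ipBl p (x y z : 'cV[C]_p) : ip (y - z) x = ip y x - ip z x.
Proof. by rewrite ipDl ipNl. Qed.

Lemma conjc_realC (a : R) : conjc (a%:C%C) = a%:C%C.
Proof. exact: conjc_real. Qed.

Lemma amgmC p (x y : 'cV[C]_p) (t : R) : 0 < t ->
  ip x y + ip y x <= t%:C%C * ip x x + t^-1%:C%C * ip y y.
Proof.
move=> t0.
have H := ip_ge0 (t%:C%C *: x - y).
rewrite ipBl !ipBr !ipZl !ipZr conjc_realC in H.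
rewrite -subr_ge0.
have -> : t%:C%C * ip x x + t^-1%:C%C * ip y y - (ip x y + ip y x) =
   t^-1%:C%C * (t%:C%C * (t%:C%C * ip x x) - t%:C%C * ip x y -
     (t%:C%C * ip y x - ip y y)).
  have tC : t%:C%C != 0.
    by apply/eqP => h; have := congr1 (@complex.Re R) h => /= h2; rewrite h2 ltxx in t0.
  have -> : t^-1%:C%C = (t%:C%C)^-1 by rewrite fmorphV.
  by field.
by apply: mulr_ge0 => //; rewrite ler0c invr_ge0 ltW.
Qed.

Lemma lec_Re (a b : C) : a <= b -> complex.Re a <= complex.Re b.
Proof. by rewrite lecE => /andP[]. Qed.

Lemma ge0_realC (c : C) : 0 <= c -> c = (complex.Re c)%:C%C.
Proof. by case: c => a b; rewrite lecE /= => /andP[/eqP -> _]. Qed.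

Lemma ReM_real (t : R) (z : C) : complex.Re (t%:C%C * z) = t * complex.Re z.
Proof. by case: z => a b /=; rewrite mul0r subr0. Qed.

Lemma Re_vnorm2 p (x : 'cV[C]_p) : complex.Re (ip x x) = vnorm2 x.
Proof. by rewrite -vnorm2C. Qed.

Lemma ReipC p (x y : 'cV[C]_p) : complex.Re (ip y x) = complex.Re (ip x y).
Proof. by rewrite ipC; case: (ip x y). Qed.

Lemma amgmR p (x y : 'cV[C]_p) (t : R) : 0 < t ->
  2 * complex.Re (ip x y) <= t * vnorm2 x + t^-1 * vnorm2 y.
Proof.
move=> t0; have := lec_Re (amgmC x y t0).
by rewrite !raddfD /= ReipC !ReM_real !Re_vnorm2 mulr2n mulrDl !mul1r.
Qed.

Lemma vnorm2_eq0 p (x : 'cV[C]_p) : vnorm2 x = 0 -> x = 0.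
Proof.
move=> h; apply/matrixP => i j; rewrite (ord1 j) mxE.
have H : forall i0 : 'I_p, true -> 0 <= complex.Re (x i0 0) ^+ 2 + complex.Im (x i0 0) ^+ 2.
  by move=> i0 _; rewrite addr_ge0 ?sqr_ge0.
have := @psumr_eq0P _ _ _ _ H h i isT; case: (x i 0) => a b /= /eqP.
by rewrite paddr_eq0 ?sqr_ge0 // !sqrf_eq0 => /andP[/eqP -> /eqP ->].
Qed.

Lemma vnorm2Z p (x : 'cV[C]_p) (r : R) : vnorm2 (r%:C%C *: x) = r ^+ 2 * vnorm2 x.
Proof.
apply: (@complexI R); rewrite vnorm2C ipZl ipZr conjc_realC -vnorm2C.
by rewrite rmorphM rmorphXn mulrA -expr2.
Qed.

Lemma mx_boundC p q (A : 'M[C]_(p,q)) : exists c : C, 0 <= c /\ forall x, ip (A *m x) (A *m x) <= c * ip x x.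
Proof.
exists (\sum_i (\sum_j `|A i j|) ^+ 2); split.
  by apply: sumr_ge0 => i _; apply: exprn_ge0; apply: sumr_ge0 => j _; exact: normr_ge0.
move=> x.
set S := ip x x.
have S0 : 0 <= S by exact: ip_ge0.
pose s : C := (Num.sqrt (vnorm2 x))%:C%C.
have s0 : 0 <= s by rewrite ler0c sqrtr_ge0.
have s2 : s ^+ 2 = S.
  by rewrite -rmorphXn sqr_sqrtr ?vnorm2_ge0 //= vnorm2C.
have xj : forall j, `|x j 0| <= s.
  move=> j; rewrite -(ler_pXn2r (n:=2)) ?nnegrE ?normr_ge0 // s2 sqr_normc.
  rewrite /S /ip (bigD1 j) //= mulrC lerDl.
  by apply: sumr_ge0 => i _; rewrite mulrC mulcJ_ge0.
rewrite /ip mulr_suml; apply: ler_sum => i _.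
rewrite mulrC -sqr_normc -/S -s2 -exprMn.
rewrite ler_pXn2r ?nnegrE ?normr_ge0 //; last first.
  by apply: mulr_ge0 => //; apply: sumr_ge0 => j _; exact: normr_ge0.
rewrite mxE mulr_suml; apply: (le_trans (ler_norm_sum _ _ _)).
apply: ler_sum => j _; rewrite normrM ler_wpM2l //.
Qed.

Lemma mx_bound p q (A : 'M[C]_(p,q)) : exists c : R, 0 <= c /\ forall x, vnorm2 (A *m x) <= c * vnorm2 x.
Proof.
have [c [c0 h]] := mx_boundC A.
exists (complex.Re c); split; first by move: c0; rewrite lecE => /andP[].
move=> x; rewrite -lecR !vnorm2C rmorphM /= -ge0_realC // vnorm2C; exact: h.
Qed.

End CLin.

Section SM.
Variable R : realType.
Local Notation C := R[i].

Definition SMset p q (A : 'M[C]_(p,q)) : set R :=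
  [set Num.sqrt (vnorm2 (A *m x)) | x in [set x : 'cV[C]_q | vnorm2 x = 1]].

Lemma sigma_maxE p q (A : 'M[C]_(p,q)) : sigma_max A = sup (SMset A).
Proof. by []. Qed.

Lemma unit_vec q : (0 < q)%N -> exists x : 'cV[C]_q, vnorm2 x = 1.
Proof.
case: q => // q _; exists (delta_mx 0 0).
rewrite /vnorm2 (bigD1 0) //= big1 ?addr0.
  by rewrite !mxE /= expr1n expr0n /= addr0.
by move=> i /negPf ne; rewrite !mxE ne /= expr0n /= addr0.
Qed.

Lemma SM_ne p q (A : 'M[C]_(p,q)) : (0 < q)%N -> (SMset A !=set0)%classic.
Proof. by move=> /unit_vec [x hx]; exists (Num.sqrt (vnorm2 (A *m x))); exists x. Qed.

Lemma SM_ub p q (A : 'M[C]_(p,q)) : has_ubound (SMset A).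
Proof.
have [c [c0 h]] := mx_bound A.
exists (Num.sqrt c) => _ [x /= hx <-].
by rewrite ler_sqrt // -[c]mulr1 -hx h.
Qed.

Lemma SM_ge0 p q (A : 'M[C]_(p,q)) : (0 < q)%N -> 0 <= sigma_max A.
Proof.
move=> /unit_vec [x hx]; apply: (le_trans (sqrtr_ge0 (vnorm2 (A *m x)))).
by apply: ub_le_sup; [exact: SM_ub | exists x].
Qed.

Lemma SM_bound p q (A : 'M[C]_(p,q)) x :
  vnorm2 (A *m x) <= sigma_max A ^+ 2 * vnorm2 x.
Proof.
have [c [c0 h]] := mx_bound A.
have [x0|xn0] := eqVneq (vnorm2 x) 0.
  by have := h x; rewrite x0 !mulr0.
have xp : 0 < vnorm2 x by rewrite lt_neqAle eq_sym xn0 vnorm2_ge0.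
set a := Num.sqrt (vnorm2 x).
have ap : 0 < a by rewrite sqrtr_gt0.
have a2 : a ^+ 2 = vnorm2 x by rewrite sqr_sqrtr // ltW.
set x' := (a^-1)%:C%C *: x.
have hx' : vnorm2 x' = 1 by rewrite vnorm2Z -a2 exprVn mulVf // expf_neq0 // gt_eqF.
have le1 : Num.sqrt (vnorm2 (A *m x')) <= sigma_max A.
  by apply: ub_le_sup; [exact: SM_ub | exists x'].
have sm0 : 0 <= sigma_max A by apply: le_trans le1; exact: sqrtr_ge0.
have : vnorm2 (A *m x') <= sigma_max A ^+ 2.
  rewrite -(ler_pXn2r (n:=2)) ?nnegrE ?sqrtr_ge0 // in le1.
  by rewrite sqr_sqrtr ?vnorm2_ge0 in le1.
rewrite /x' -scalemxAr vnorm2Z exprVn -a2 => H.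
have a20 : 0 < a ^+ 2 by rewrite exprn_gt0.
by rewrite -ler_pdivrMr // mulrC.
Qed.

Lemma SM_le p q (A : 'M[C]_(p,q)) (c : R) : (0 < q)%N -> 0 <= c ->
  (forall x, vnorm2 (A *m x) <= c ^+ 2 * vnorm2 x) -> sigma_max A <= c.
Proof.
move=> q0 c0 h; apply: ge_sup; first exact: SM_ne.
move=> _ [x /= hx <-]; rewrite -(ger0_norm c0) -sqrtr_sqr ler_sqrt ?sqr_ge0 //.
by rewrite -[_ ^+ 2]mulr1 -hx h.
Qed.

Lemma SM_adherent p q (A : 'M[C]_(p,q)) (d : R) : (0 < q)%N -> 0 < d ->
  exists2 x, vnorm2 x = 1 & sigma_max A - d < Num.sqrt (vnorm2 (A *m x)).
Proof.
move=> q0 d0; have [e [x /= hx <-] he] := sup_adherent d0 (conj (SM_ne A q0) (SM_ub A)).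
by exists x.
Qed.

Lemma adj_bound p q (A : 'M[C]_(p,q)) (c : R) : 0 <= c ->
  (forall x, vnorm2 (A *m x) <= c * vnorm2 x) ->
  forall y, vnorm2 (hc A *m y) <= c * vnorm2 y.
Proof.
move=> c0 h y; set z := hc A *m y.
set a := vnorm2 z; set b := vnorm2 y.
have a0 : 0 <= a by exact: vnorm2_ge0.
have b0 : 0 <= b by exact: vnorm2_ge0.
have key : forall t, 0 < t -> 2 * a <= t * b + t^-1 * (c * a).
  move=> t t0; have := amgmR y (A *m z) t0.
  rewrite ip_adj -/z Re_vnorm2 -/a -/b => H; apply: (le_trans H).
  by rewrite lerD2l ler_wpM2l // ?invr_ge0 ?ltW // h.
have [az|an0] := eqVneq a 0; first by rewrite az mulr_ge0.
have ap : 0 < a by rewrite lt_neqAle eq_sym an0 a0.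
have [bz|bn0] := eqVneq b 0.
  have := key (c + 1) (ltr_wpDl c0 ltr01); rewrite bz mulr0 add0r => H.
  exfalso; move: H; set u := (c + 1)^-1.
  have u0 : 0 < u by rewrite invr_gt0 ltr_wpDl.
  have hu : u * (c + 1) = 1 by rewrite mulVf // gt_eqF // ltr_wpDl.
  move=> H; nra.
have bp : 0 < b by rewrite lt_neqAle eq_sym bn0 b0.
have := key (a / b) (divr_gt0 ap bp).
have -> : a / b * b = a by rewrite divfK // gt_eqF.
have -> : (a / b)^-1 * (c * a) = c * b.
  by rewrite invf_div mulrCA divfK ?gt_eqF.
lra.
Qed.

Lemma ip_le_sm p (A : 'M[C]_p) x : (0 < p)%N ->
  complex.Re (ip x (A *m x)) <= sigma_max A * vnorm2 x.
Proof.
move=> p0; have s0 := SM_ge0 A p0.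
have [sz|sn0] := eqVneq (sigma_max A) 0.
  have := SM_bound A x; rewrite sz expr0n /= mul0r => H.
  have /vnorm2_eq0 -> : vnorm2 (A *m x) = 0 by apply/eqP; rewrite eq_le H vnorm2_ge0.
  by rewrite /ip big1 ?mul0r // => i _; rewrite mxE mulr0.
have sp : 0 < sigma_max A by rewrite lt_neqAle eq_sym sn0 s0.
have := amgmR x (A *m x) sp => H.
have H2 := SM_bound A x.
have : (sigma_max A)^-1 * vnorm2 (A *m x) <= sigma_max A * vnorm2 x.
  by rewrite ler_pdivrMl // mulrA -expr2.
lra.
Qed.

End SM.

Lemma invmxM' (F : fieldType) n (A B : 'M[F]_n) : A \in unitmx -> B \in unitmx ->
  invmx (A *m B) = invmx B *m invmx A.
Proof.
move=> Au Bu; have ABu : A *m B \in unitmx by rewrite unitmx_mul Au Bu.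
have e : (A *m B) *m (invmx B *m invmx A) = 1%:M.
  by rewrite mulmxA mulmxK // mulmxV.
by rewrite -[LHS]mulmx1 -e mulmxA mulVmx // mul1mx.
Qed.

Lemma unit_from_inj (F : fieldType) n (A : 'M[F]_n) :
  (forall v : 'cV[F]_n, A *m v = 0 -> v = 0) -> A \in unitmx.
Proof.
move=> h; rewrite -unitmx_tr -row_free_unit -kermx_eq0; apply/eqP.
apply/row_matrixP => i; rewrite row0.
have : row i (kermx A^T) *m A^T = 0 by rewrite -row_mul mulmx_ker row0.
move=> /(congr1 trmx); rewrite trmx_mul trmxK trmx0 => /h /(congr1 trmx).
by rewrite trmxK trmx0.
Qed.

Section ToC.
Variable R : realType.
Local Notation C := R[i].

Lemma toCM p q r (A : 'M[R]_(p,q)) (B : 'M[R]_(q,r)) : toC (A *m B) = toC A *m toC B.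
Proof. exact: map_mxM. Qed.
Lemma toCD p q (A B : 'M[R]_(p,q)) : toC (A + B) = toC A + toC B.
Proof. exact: map_mxD. Qed.
Lemma toCZ p q (a : R) (A : 'M[R]_(p,q)) : toC (a *: A) = a%:C%C *: toC A.
Proof. exact: map_mxZ. Qed.
Lemma toC1 p : toC (1%:M : 'M[R]_p) = 1%:M.
Proof. exact: map_mx1. Qed.
Lemma toCV p (A : 'M[R]_p) : toC (invmx A) = invmx (toC A).
Proof. exact: map_invmx. Qed.
Lemma toC_unit p (A : 'M[R]_p) : (toC A \in unitmx) = (A \in unitmx).
Proof. exact: map_unitmx. Qed.
Lemma hc_toC p q (A : 'M[R]_(p,q)) : hc (toC A) = toC A^T.
Proof. by apply/matrixP => i j; rewrite !mxE conjc_realC. Qed.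
Lemma hc_row p q1 q2 (A : 'M[C]_(p,q1)) (B : 'M[C]_(p,q2)) :
  hc (row_mx A B) = col_mx (hc A) (hc B).
Proof. by rewrite /hc tr_row_mx map_col_mx. Qed.
Lemma hc_scalar p (s : C) : hc (s%:M : 'M[C]_p) = (conjc s)%:M.
Proof. by rewrite /hc tr_scalar_mx map_scalar_mx. Qed.
Lemma hc_inv p (A : 'M[C]_p) : hc (invmx A) = invmx (hc A).
Proof. by rewrite /hc trmx_inv map_invmx. Qed.

Lemma vnorm2_col p1 p2 (a : 'cV[C]_p1) (b : 'cV[C]_p2) :
  vnorm2 (col_mx a b) = vnorm2 a + vnorm2 b.
Proof. by rewrite /vnorm2 big_split_ord /=; congr (_ + _); apply: eq_bigr => i _; rewrite ?col_mxEu ?col_mxEd. Qed.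

Lemma ip_herm p (H : 'M[C]_p) x : hc H = H -> ip x (H *m x) = (complex.Re (ip x (H *m x)))%:C%C.
Proof.
move=> hH; have e : ip x (H *m x) = conjc (ip x (H *m x)).
  by rewrite -ipC ip_adj hH.
by move: e; case: (ip x (H *m x)) => a b [] /= /eqP; rewrite -subr_eq0 opprK -mulr2n mulrn_eq0 /= => /eqP ->.
Qed.

End ToC.

Section Abs.
Variable R : realType.
Local Notation C := R[i].
Variables (r m nn : nat) (K : 'M[R]_(m, r)) (F : 'M[R]_(nn, r)).
Local Notation L := (F^T *m F).
Local Notation M := (K^T *m K).
Hypotheses (Lu : L \in unitmx) (Mu : M \in unitmx) (r0 : (0 < r)%N) (m0 : (0 < m)%N).
Local Notation N := (invmx L).
Local Notation Mi := (invmx M).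
Local Notation Pm := (K *m Mi *m K^T).
Local Notation X := (K *m invmx (M *m L *m M) *m K^T).
Local Notation B := (K *m Mi *m N *m F^T).

Lemma Lsym : L^T = L. Proof. by rewrite trmx_mul trmxK. Qed.
Lemma Msym : M^T = M. Proof. by rewrite trmx_mul trmxK. Qed.
Lemma Nsym : N^T = N. Proof. by rewrite trmx_inv Lsym. Qed.
Lemma Misym : Mi^T = Mi. Proof. by rewrite trmx_inv Msym. Qed.
Lemma Xinv : invmx (M *m L *m M) = Mi *m N *m Mi.
Proof.
rewrite invmxM' ?unitmx_mul ?Mu ?Lu // invmxM' // mulmxA.
by []. Qed.
Lemma PmPm : Pm *m Pm = Pm.
Proof.
by rewrite -!mulmxA [K^T *m (K *m _)]mulmxA mulKmx.
Qed.
Lemma Pmsym : Pm^T = Pm.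
Proof. by rewrite !trmx_mul trmxK Misym mulmxA. Qed.
Lemma XE : X = K *m Mi *m N *m Mi *m K^T.
Proof. by rewrite Xinv !mulmxA. Qed.
Lemma PmX : Pm *m X = X.
Proof.
by rewrite XE -!mulmxA [K^T *m (K *m _)]mulmxA mulKmx.
Qed.
Lemma XPm : X *m Pm = X.
Proof.
rewrite XE -!mulmxA; congr (K *m (Mi *m (N *m _))).
by rewrite [K^T *m (K *m _)]mulmxA mulKmx.
Qed.
Lemma BBt : B *m B^T = X.
Proof.
rewrite XE !trmx_mul !trmxK Nsym Misym.
rewrite -!mulmxA; congr (K *m (Mi *m _)).
by rewrite [F^T *m (F *m _)]mulmxA mulKmx.
Qed.


Lemma trZ p q (a : R) (A : 'M[R]_(p,q)) : (a *: A)^T = a *: A^T.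
Proof. by apply/matrixP => i j; rewrite !mxE. Qed.

Lemma trB p q (A B0 : 'M[R]_(p,q)) : (A - B0)^T = A^T - B0^T.
Proof. by apply/matrixP => i j; rewrite !mxE. Qed.

Lemma toCN p q (A : 'M[R]_(p,q)) : toC (- A) = - toC A.
Proof. exact: map_mxN. Qed.

Lemma ipT p q1 q2 (A : 'M[R]_(p,q1)) (Bm : 'M[R]_(p,q2)) x y :
  ip (toC A *m x) (toC Bm *m y) = ip x (toC (A^T *m Bm) *m y).
Proof. by rewrite (toCM A^T Bm) -mulmxA [in RHS]ip_adj hc_toC trmxK. Qed.

Lemma ipT1 p q (A : 'M[R]_(p,q)) x y : ip x (toC A *m y) = ip (toC A^T *m x) y.
Proof. by rewrite ip_adj hc_toC. Qed.

Lemma ReM_realr (z : C) (t : R) : complex.Re (z * t%:C%C) = complex.Re z * t.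
Proof. by case: z => a b /=; rewrite mulr0 subr0. Qed.

Lemma Z_unit (c : C) : complex.Re c = 0 -> (c *: toC N + toC M) \in unitmx.
Proof.
move=> c0; apply: unit_from_inj => v hv.
move: hv; set Z := c *: toC N + toC M => hv.
have e : ip v (Z *m v) = 0 by rewrite hv /ip big1 // => i _; rewrite mxE mulr0.
rewrite /Z mulmxDl -scalemxAl ipDr ipZr in e.
rewrite (@ip_herm _ _ (toC N)) ?hc_toC ?Nsym // in e.
have eM : ip v (toC M *m v) = ip (toC K *m v) (toC K *m v) by rewrite ipT.
rewrite eM -vnorm2C in e.
have := congr1 (@complex.Re R) e; rewrite raddfD /=.
rewrite ReM_realr c0 mul0r add0r => /vnorm2_eq0 Kv.
have : toC M *m v = 0 by rewrite toCM -mulmxA Kv mulmx0.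
by move=> /(congr1 (mulmx (invmx (toC M)))); rewrite mulKmx ?toC_unit // mulmx0.
Qed.

Variables sw sv : R.
Definition PiA (s : C) : 'M[C]_(m, nn + m) :=
  toC K *m invmx (s%:M + toC (L *m M)) *m
  row_mx (toC (sw *: F^T)) (toC ((- sv) *: (L *m K^T))).

Lemma Qfact (s : C) : s%:M + toC (L *m M) = toC L *m (s *: toC N + toC M).
Proof.
by rewrite mulmxDr -scalemxAr -!toCM mulmxV // toC1 scalemx1.
Qed.

Lemma hcQ (s : C) : hc (s%:M + toC (L *m M)) = (conjc s *: toC N + toC M) *m toC L.
Proof.
rewrite hcD hc_scalar hc_toC trmx_mul Lsym Msym.
by rewrite mulmxDl -scalemxAl -!toCM mulVmx // toC1 scalemx1.
Qed.

Definition uvec (s : C) (y : 'cV[C]_m) : 'cV[C]_r :=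
  invmx (conjc s *: toC N + toC M) *m (toC K^T *m y).

Lemma u_eq (s : C) y : complex.Re s = 0 ->
  (conjc s *: toC N + toC M) *m uvec s y = toC K^T *m y.
Proof.
move=> s0; rewrite /uvec mulKVmx // Z_unit //.
by move: s0; case: s => a b /= ->.
Qed.

Lemma PiA_formula (s : C) y : complex.Re s = 0 ->
  vnorm2 (hc (PiA s) *m y) =
  sw ^+ 2 * complex.Re (ip (uvec s y) (toC N *m uvec s y)) +
  sv ^+ 2 * complex.Re (ip (uvec s y) (toC M *m uvec s y)).
Proof.
move=> s0.
have cs0 : complex.Re (conjc s) = 0 by move: s0; case: s => a b /= ->.
set u := uvec s y.
have Qu : (s%:M + toC (L *m M)) \in unitmx.
  by rewrite Qfact unitmx_mul toC_unit Lu Z_unit.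
have -> : hc (PiA s) *m y =
    col_mx (toC (sw *: F) *m (toC N *m u)) (toC ((- sv) *: (K *m L)) *m (toC N *m u)).
  rewrite /PiA !hc_mul hc_row !hc_toC hc_inv hcQ invmxM' ?Z_unit ?toC_unit //.
  rewrite -toCV !trZ trmxK trmx_mul trmxK Lsym.
  by rewrite -mul_col_mx /u /uvec !mulmxA.
rewrite vnorm2_col !toCZ -!scalemxAl !vnorm2Z sqrrN.
congr (_ * _ + _ * _).
  rewrite -Re_vnorm2 ipT mulmxA -toCM mulmxV // toC1 mul1mx.
  by rewrite [in RHS]ipT1 Nsym.
rewrite mulmxA -toCM -mulmxA mulmxV // mulmx1.
by rewrite -Re_vnorm2 ipT.
Qed.



Lemma conjc_addI (c : C) : complex.Re c = 0 -> conjc c + c = 0.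
Proof. by case: c => a b /= ->; apply/eqP; rewrite eq_complex /= addr0 addNr eqxx. Qed.

Lemma KtXK : K^T *m X *m K = N.
Proof.
rewrite XE -!mulmxA mulVmx // mulmx1 mulmxA mulKVmx //.

Qed.

Lemma claimA u : complex.Re (ip u (toC N *m u)) <=
  sigma_max (toC X) * complex.Re (ip u (toC M *m u)).
Proof.
have e1 : ip u (toC N *m u) = ip (toC K *m u) (toC X *m (toC K *m u)).
  by rewrite mulmxA -toCM ipT mulmxA KtXK.
have e2 : complex.Re (ip u (toC M *m u)) = vnorm2 (toC K *m u).
  by rewrite -Re_vnorm2 ipT.
by rewrite e1 e2; apply: ip_le_sm.
Qed.

Lemma Pm_le y : complex.Re (ip y (toC Pm *m y)) <= vnorm2 y.
Proof.
set Q := 1%:M - Pm.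
have QQ : Q^T *m Q = Q.
  by rewrite /Q trB trmx1 Pmsym mulmxBl mul1mx mulmxBr mulmx1 PmPm subrr subr0.
have e : ip y y - ip y (toC Pm *m y) = ip (toC Q *m y) (toC Q *m y).
  by rewrite ipT QQ /Q toCD toC1 mulmxDl mul1mx ipDr toCN mulNmx ipNr.
have := ip_ge0 (toC Q *m y); rewrite -e subr_ge0 => /lec_Re.
by rewrite Re_vnorm2.
Qed.

Lemma claimB (c : C) u y : complex.Re c = 0 ->
  (c *: toC N + toC M) *m u = toC K^T *m y ->
  complex.Re (ip u (toC M *m u)) <= vnorm2 y.
Proof.
move=> c0 hu; apply: le_trans (Pm_le y).
apply: lec_Re.
set a := toC N *m u.
have h1 : ip y (toC Pm *m y) = ip (toC K^T *m y) (toC Mi *m (toC K^T *m y)).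
  by rewrite mulmxA -toCM ipT trmxK mulmxA.
rewrite h1 -hu mulmxDl -scalemxAl -/a mulmxDr -scalemxAr mulmxA -toCM mulVmx // toC1 mul1mx.
rewrite !ipDl !ipDr !ipZl !ipZr.
have e1 : ip a u = ip u a by rewrite /a [in RHS]ipT1 Nsym.
have e2 : ip (toC M *m u) (toC Mi *m a) = ip u a.
  by rewrite ipT Msym mulmxV // toC1 mul1mx.
have e3 : ip (toC M *m u) u = ip u (toC M *m u) by rewrite [in RHS]ipT1 Msym.
have e4 : 0 <= ip a (toC Mi *m a).
  have -> : Mi = (K *m Mi)^T *m (K *m Mi).
    by rewrite trmx_mul Misym mulmxA -[Mi *m K^T *m K]mulmxA mulVmx // mul1mx.
  by rewrite -ipT ip_ge0.
rewrite e1 e2 e3.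
have -> : forall A0 B0 C0 D0 : C, A0 + B0 + (C0 + D0) = A0 + (B0 + C0) + D0.
  by move=> *; ring.
rewrite -mulrDl conjc_addI // mul0r addr0 lerDr mulrA.
by apply: mulr_ge0 => //; rewrite mulrC mulcJ_ge0.
Qed.



Local Notation sX := (sigma_max (toC X)).
Definition cval := sw ^+ 2 * sX + sv ^+ 2.

Lemma sX_ge0 : 0 <= sX. Proof. exact: SM_ge0. Qed.
Lemma cval_ge0 : 0 <= cval.
Proof. by rewrite /cval addr_ge0 ?sqr_ge0 // mulr_ge0 ?sqr_ge0 // sX_ge0. Qed.

Lemma ipM_ge0 u : 0 <= complex.Re (ip u (toC M *m u)).
Proof. by rewrite -ipT Re_vnorm2 vnorm2_ge0. Qed.

Lemma upper_bound (w : R) : sigma_max (PiA (0 +i* w)%C) <= Num.sqrt cval.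
Proof.
set s := (0 +i* w)%C.
have s0 : complex.Re s = 0 by [].
have cs0 : complex.Re (conjc s) = 0 by [].
apply: SM_le; [by rewrite addn_gt0 m0 orbT | exact: sqrtr_ge0 |].
rewrite sqr_sqrtr ?cval_ge0 //.
have := @adj_bound _ _ _ (hc (PiA s)) cval cval_ge0; rewrite hcK; apply.
move=> y; rewrite PiA_formula //.
set u := uvec s y.
have hA := claimA u.
have hB := claimB cs0 (u_eq y s0).
have hb := ipM_ge0 u.
have sx := sX_ge0.
have sw2 : 0 <= sw ^+ 2 by exact: sqr_ge0.
have sv2 : 0 <= sv ^+ 2 by exact: sqr_ge0.
rewrite /cval -/u in hB *.
set a := complex.Re _ in hA *; set b := complex.Re _ in hA hB hb *.
have h1 : sw ^+ 2 * a <= sw ^+ 2 * (sX * b) by rewrite ler_wpM2l.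
have h2 : (sw ^+ 2 * sX + sv ^+ 2) * b <= (sw ^+ 2 * sX + sv ^+ 2) * vnorm2 y.
  by rewrite ler_wpM2l // addr_ge0 // mulr_ge0.
lra.
Qed.


Local Notation s00 := ((0 : R) +i* (0 : R))%C.

Lemma formula0 y : vnorm2 (hc (PiA s00) *m y) =
  sw ^+ 2 * complex.Re (ip y (toC X *m y)) + sv ^+ 2 * complex.Re (ip y (toC Pm *m y)).
Proof.
rewrite PiA_formula //.
have -> : uvec s00 y = toC Mi *m (toC K^T *m y).
  rewrite /uvec.
  have -> : conjc s00 = 0 by apply/eqP; rewrite eq_complex /= oppr0 !eqxx.
  by rewrite scale0r add0r toCV.
set w := toC K^T *m y.
have hP : ip y (toC Pm *m y) = ip w (toC Mi *m w).
  by rewrite /w mulmxA -toCM ipT trmxK mulmxA.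
congr (_ * complex.Re _ + _ * complex.Re _).
  by rewrite ipT /w mulmxA -toCM ipT trmxK Misym mulmxA -toCM XE !mulmxA.

rewrite mulmxA -toCM mulmxV // toC1 mul1mx.
by rewrite hP [in RHS]ipT1 Misym.
Qed.

Lemma ipX_ge0 v : 0 <= complex.Re (ip v (toC X *m v)).
Proof.
have -> : ip v (toC X *m v) = ip (toC B^T *m v) (toC B^T *m v) by rewrite ipT trmxK BBt.
by rewrite Re_vnorm2 vnorm2_ge0.
Qed.

Lemma sqXv v : vnorm2 (toC X *m v) <= sX * complex.Re (ip v (toC X *m v)).
Proof.
have sx := sX_ge0.
have [sz|sn0] := eqVneq sX 0.
  have := SM_bound (toC X) v; rewrite sz expr0n /= mul0r mul0r => H.
  exact: H.
have sp : 0 < sX by rewrite lt_neqAle eq_sym sn0 sx.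
have e : ip (toC X *m v) (toC X *m v) =
    ip (toC B^T *m (toC X *m v)) (toC B^T *m v).
  by rewrite [in RHS]ipT trmxK BBt.
have spi : 0 < sX^-1 by rewrite invr_gt0.
have := amgmR (toC B^T *m (toC X *m v)) (toC B^T *m v) spi.
rewrite -e Re_vnorm2 invrK.
have e1 : vnorm2 (toC B^T *m (toC X *m v)) = complex.Re (ip (toC X *m v) (toC X *m (toC X *m v))).
  by rewrite -Re_vnorm2 ipT trmxK BBt.
have e2 : vnorm2 (toC B^T *m v) = complex.Re (ip v (toC X *m v)).
  by rewrite -Re_vnorm2 ipT trmxK BBt.
rewrite e1 e2 => H.
have H2 := ip_le_sm (toC X) (toC X *m v) m0.
have : sX^-1 * complex.Re (ip (toC X *m v) (toC X *m (toC X *m v))) <= vnorm2 (toC X *m v).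
  by rewrite ler_pdivrMl // .
lra.
Qed.


Lemma ipZZ p (k : R) (A : 'M[C]_p) (w : 'cV[C]_p) :
  ip (k%:C%C *: w) (A *m (k%:C%C *: w)) = (k ^+ 2)%:C%C * ip w (A *m w).
Proof. by rewrite -scalemxAr ipZl ipZr conjc_realC mulrA -rmorphM expr2. Qed.

Lemma vnorm20 p : vnorm2 (0 : 'cV[C]_p) = 0.
Proof. by rewrite /vnorm2 big1 // => i _; rewrite mxE /= expr0n /= addr0. Qed.

Lemma useY w : vnorm2 w != 0 -> toC Pm *m w = w ->
  sw ^+ 2 * (complex.Re (ip w (toC X *m w)) / vnorm2 w) + sv ^+ 2 <=
  sigma_max (PiA s00) ^+ 2.
Proof.
move=> wn0 Pw.
have wp : 0 < vnorm2 w by rewrite lt_neqAle eq_sym wn0 vnorm2_ge0.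
set a := Num.sqrt (vnorm2 w).
have ap : 0 < a by rewrite sqrtr_gt0.
have a2 : a ^+ 2 = vnorm2 w by rewrite sqr_sqrtr // ltW.
set y := (a^-1)%:C%C *: w.
have hy : vnorm2 y = 1 by rewrite vnorm2Z -a2 exprVn mulVf // expf_neq0 // gt_eqF.
have := @adj_bound _ _ _ (PiA s00) (sigma_max (PiA s00) ^+ 2) (sqr_ge0 _)
   (SM_bound (PiA s00)) y.
rewrite hy mulr1 formula0 /y !ipZZ !ReM_real.
by rewrite Pw Re_vnorm2 exprVn a2 mulVf ?gt_eqF // mulr1 [_^-1 * _]mulrC.

Qed.

Lemma lower_d d : 0 < d ->
  sw ^+ 2 * (sX - 2 * d) + sv ^+ 2 <= sigma_max (PiA s00) ^+ 2.
Proof.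
move=> d0.
have sw2 : 0 <= sw ^+ 2 by exact: sqr_ge0.
have [v hv hvX] := SM_adherent (toC X) m0 d0.
have [Pz|Pn0] := eqVneq (vnorm2 (toC Pm *m v)) 0.
  have Xv0 : toC X *m v = 0.
    by rewrite -XPm toCM -mulmxA (vnorm2_eq0 Pz) mulmx0.
  have {}hvX : sX - d < 0 by move: hvX; rewrite Xv0 vnorm20 sqrtr0.
  have [e he] := unit_vec R r0.
  set w0 := toC K *m e.
  have Pw0 : toC Pm *m w0 = w0.
    by rewrite /w0 mulmxA -toCM -mulmxA -mulmxA mulVmx // mulmx1.
  have w0n0 : vnorm2 w0 != 0.
    apply/eqP => /vnorm2_eq0 h0.
    have : toC M *m e = 0 by rewrite toCM -mulmxA -/w0 h0 mulmx0.
    move=> /(congr1 (mulmx (invmx (toC M)))); rewrite mulKmx ?toC_unit // mulmx0 => e0.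
    by move: he; rewrite e0 vnorm20 => /eqP; rewrite eq_sym oner_eq0.
  have := useY w0n0 Pw0.
  have : 0 <= complex.Re (ip w0 (toC X *m w0)) / vnorm2 w0.
    by rewrite divr_ge0 ?ipX_ge0 ?vnorm2_ge0.
  move=> h1 h2; apply: le_trans h2; rewrite lerD2r.
  apply: ler_wpM2l => //; apply: le_trans h1; lra.
set w := toC Pm *m v.
have Pw : toC Pm *m w = w by rewrite /w mulmxA -toCM PmPm.
have := useY Pn0 Pw.
have eX : ip w (toC X *m w) = ip v (toC X *m v).
  by rewrite /w [in LHS]mulmxA -toCM ipT Pmsym mulmxA PmX XPm.
have wle : vnorm2 w <= 1.
  rewrite -hv -Re_vnorm2 /w ipT Pmsym PmPm; exact: Pm_le.
have wp : 0 < vnorm2 w by rewrite lt_neqAle eq_sym Pn0 vnorm2_ge0.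
rewrite eX; set rho := complex.Re _.
have rho0 : 0 <= rho := ipX_ge0 v.
have h1 : rho <= rho / vnorm2 w.
  by rewrite ler_pdivlMr // ler_piMr.
have h2 : sX - 2 * d <= rho.
  have sx := sX_ge0.
  have [le0|gt0] := lerP (sX - d) 0; first lra.
  have hsq := sqXv v; rewrite -/rho in hsq.
  have : (sX - d) ^+ 2 < vnorm2 (toC X *m v).
    have := hvX; rewrite -(ltr_pXn2r (n:=2)) ?nnegrE ?sqrtr_ge0 ?ltW //.
    by rewrite sqr_sqrtr ?vnorm2_ge0.
  move=> h3.
  have sp : 0 < sX by lra.
  have : sX * (sX - 2 * d) < sX * rho by nra.
  by rewrite ltr_pM2l // => /ltW.
move=> H; apply: le_trans H; rewrite lerD2r; apply: ler_wpM2l => //.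
exact: le_trans h2 h1.
Qed.


Lemma lower_bound : Num.sqrt cval <= sigma_max (PiA s00).
Proof.
have q0 : (0 < nn + m)%N by rewrite addn_gt0 m0 orbT.
have s0 := SM_ge0 (PiA s00) q0.
have hc : cval <= sigma_max (PiA s00) ^+ 2.
  rewrite leNgt; apply/negP => hlt.
  set g := cval - sigma_max (PiA s00) ^+ 2.
  have g0 : 0 < g by rewrite subr_gt0.
  set d := g / (4 * (sw ^+ 2 + 1)).
  have hp : 0 < 4 * (sw ^+ 2 + 1) by rewrite mulr_gt0 // ltr_wpDl ?sqr_ge0.
  have d0 : 0 < d by rewrite divr_gt0.
  have hd : d * (4 * (sw ^+ 2 + 1)) = g by rewrite divfK ?gt_eqF.
  have := lower_d d0; rewrite /g /cval in hd *.
  have sw2 : 0 <= sw ^+ 2 by exact: sqr_ge0.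
  move=> H; nra.
by rewrite -(ger0_norm s0) -sqrtr_sqr ler_sqrt ?sqr_ge0.
Qed.

Lemma hinf_abs : (hinf_norm PiA * hinf_norm PiA)%E = cval%:E.
Proof.
have -> : hinf_norm PiA = (Num.sqrt cval)%:E.
  apply/eqP; rewrite eq_le; apply/andP; split.
    by apply: ge_ereal_sup => _ [w _ <-]; rewrite lee_fin upper_bound.
  apply: le_trans (ereal_sup_ubound _); last by exists 0.
  by rewrite lee_fin lower_bound.
by rewrite -EFinM -expr2 sqr_sqrtr // cval_ge0.
Qed.

End Abs.

Lemma connect_inv (T : finType) (e : rel T) (U : Type) (f : T -> U) :
  (forall a b, e a b -> f a = f b) -> forall a b, connect e a b -> f a = f b.
Proof.
move=> h a b /connectP [p pth ->]; elim: p a pth => //= c p IH a /andP [eac pth].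
by rewrite (h _ _ eac) IH.
Qed.

Section Graph.
Variable R : realType.
Variables (n k : nat) (src tgt : 'I_(n.-1 + k) -> 'I_n).
Hypotheses (hn : (2 <= n)%N) (hsimple : simple_edges src tgt)
  (htree : spanning_tree src tgt (@first_edges n.-1 k)).
Local Notation D := (incidence R src tgt).
Local Notation Dt := (Dtau D).

Lemma xDt (x : 'rV[R]_n) (l : 'I_n.-1) :
  (x *m Dt) 0 l = x 0 (src (lshift k l)) - x 0 (tgt (lshift k l)).
Proof.
set l' := lshift k l.
have ne : src l' != tgt l' by case: hsimple => h _; exact: h.
rewrite mxE (bigD1 (src l')) //= (bigD1 (tgt l')) /=; last by rewrite eq_sym.
rewrite big1 ?addr0.
  rewrite /Dtau !mxE eqxx mulr1 (negPf ne) eqxx mulrN1.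
  by rewrite -/l'.
move=> i /andP [ne1 ne2]; rewrite /Dtau !mxE -/l'.
by rewrite eq_sym (negPf ne1) eq_sym (negPf ne2) mulr0.
Qed.

Lemma ker_const (x : 'rV[R]_n) : x *m Dt = 0 -> forall i j, x 0 i = x 0 j.
Proof.
move=> hx i j; apply: (connect_inv (f := fun a => x 0 a)) (htree.1 i j).
move=> a b /existsP [l /andP [hl he]].
have hl' : (l < n.-1)%N by exact: hl.
have := congr1 (fun A : 'rV[R]_n.-1 => A 0 (Ordinal hl')) hx.
rewrite xDt mxE.
have -> : lshift k (Ordinal hl') = l by apply: val_inj.
move=> /eqP; rewrite subr_eq0 => /eqP e.
by case/orP: he => /andP [/eqP <- /eqP <-] //.
Qed.

Lemma rank_Dt : \rank Dt = n.-1.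
Proof.
apply/eqP; rewrite eqn_leq rank_leq_col /=.
have n0 : (0 < n)%N by lia.
pose i0 : 'I_n := Ordinal n0.
have sub : (kermx Dt <= (const_mx 1 : 'rV[R]_n))%MS.
  apply/row_subP => i.
  have : row i (kermx Dt) *m Dt = 0.
    by apply/sub_kermxP; rewrite row_sub.
  move=> /ker_const hc.
  have hrow : forall x : 'rV[R]_n, (forall i j, x 0 i = x 0 j) -> x = x 0 i0 *: const_mx 1.
    by move=> x hx; apply/rowP => j; rewrite !mxE mulr1 (hx j i0).
  rewrite (hrow _ hc).
  by rewrite scalemx_sub // submx_refl.
have := mxrankS sub; have := rank_leq_row (const_mx 1 : 'rV[R]_n).
rewrite mxrank_ker => h1 h2.
have := leq_trans h2 h1; lia.
Qed.

Lemma Dt_inj (v : 'cV[R]_n.-1) : Dt *m v = 0 -> v = 0.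
Proof.
move=> hv.
have rf : row_free Dt^T by rewrite /row_free mxrank_tr rank_Dt.
have : v^T *m Dt^T == 0 by rewrite -trmx_mul hv trmx0.
rewrite mulmx_free_eq0 // => /eqP /(congr1 trmx); rewrite trmxK trmx0 => ->.
by [].
Qed.

End Graph.

Section Concrete.
Variable R : realType.

Lemma diagfM p (f g : 'I_p -> R) : diagf f *m diagf g = diagf (fun i => f i * g i).
Proof.
apply/matrixP => i j; rewrite /diagf mul_diag_mx !mxE.
by case: (eqVneq i j) => [->|ne]; rewrite ?mulr1n ?mulr0n ?mulr0.
Qed.

Lemma diagf_tr p (f : 'I_p -> R) : (diagf f)^T = diagf f.
Proof. exact: tr_diag_mx. Qed.

Lemma diagf_inj p (f : 'I_p -> R) (v : 'cV[R]_p) : (forall i, f i != 0) -> diagf f *m v = 0 -> v = 0.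
Proof.
move=> hf hv; apply/matrixP => i j.
have := congr1 (fun A : 'cV[R]_p => A i j) hv; rewrite /diagf mul_diag_mx !mxE => /eqP.
by rewrite mulf_eq0 (negPf (hf i)) /= => /eqP ->.
Qed.

Lemma real_inj p q (A : 'M[R]_(p,q)) (v : 'cV[R]_q) : A^T *m A *m v = 0 -> A *m v = 0.
Proof.
move=> h.
have e : ((A *m v)^T *m (A *m v)) 0 0 = 0.
  by rewrite trmx_mul -mulmxA [A^T *m _]mulmxA h mulmx0 mxE.
rewrite mxE in e.
have H : forall i : 'I_p, true -> 0 <= (A *m v)^T 0 i * (A *m v) i 0.
  by move=> i _; rewrite mxE -expr2 sqr_ge0.
apply/matrixP => i j; rewrite (ord1 j) [RHS]mxE.
have := @psumr_eq0P _ _ _ _ H e i isT.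
by rewrite [(A *m v)^T 0 i]mxE => /eqP; rewrite mulf_eq0 orbb => /eqP.
Qed.

End Concrete.

Theorem theorem2 (R : realType) (n k : nat) (hn : (2 <= n)%N)
    (src tgt : 'I_(n.-1 + k) -> 'I_n)
    (hsimple : simple_edges src tgt)
    (hconn : graph_connected src tgt)
    (htree : spanning_tree src tgt (@first_edges n.-1 k))
    (w : 'I_(n.-1 + k) -> R) (hw : forall l, 0 < w l)
    (eps : 'I_n -> R) (heps : forall i, 0 < eps i)
    (sw sv : R) :
  let D := incidence R src tgt in
  let Pi := Pitau D w eps sw sv in
  let X := Xmat D w eps in
  (hinf_norm Pi * hinf_norm Pi)%E
    = (sw ^+ 2 * sigma_max (toC X) + sv ^+ 2)%:E.
Proof.
move=> D Pi X.
set Dt := Dtau D.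
set Es := Einvsqrt eps.
set Ws := Wsqrt w.
set Rm := Rmat D.
set F := Es *m Dt.
set K := Ws *m Rm^T.
have EsT : Es^T = Es by exact: diagf_tr.
have WsT : Ws^T = Ws by exact: diagf_tr.
have EsEs : Es *m Es = Einv eps.
  rewrite /Es /Einvsqrt diagfM /Einv; congr diagf; apply: funext => i.
  by rewrite -invfM -expr2 sqr_sqrtr // ltW.
have WsWs : Ws *m Ws = Wm w.
  rewrite /Ws /Wsqrt diagfM /Wm; congr diagf; apply: funext => i.
  by rewrite -expr2 sqr_sqrtr // ltW.
have e1 : Les D eps = F^T *m F.
  by rewrite /Les /F trmx_mul EsT -/Dt mulmxA -[Dt^T *m Es *m Es]mulmxA EsEs.
have e2 : Rm *m Wm w *m Rm^T = K^T *m K.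
  by rewrite /K trmx_mul trmxK WsT -WsWs !mulmxA.
have e3 : Pi = PiA K F sw sv.
  apply: funext => s; rewrite /Pi /Pitau /PiA -/Dt -/Es -/Ws -/Rm e1 -/K.
  congr (toC _ *m invmx (_ + toC _) *m row_mx (toC (_ *: _)) (toC (_ *: _))).
  - by rewrite -e2 !mulmxA.
  - by rewrite /F trmx_mul EsT.
  - by rewrite [(Ws *m Rm^T)^T]trmx_mul trmxK WsT !mulmxA.
have e4 : X = K *m invmx (K^T *m K *m (F^T *m F) *m (K^T *m K)) *m K^T.
  rewrite /X /Xmat -/Dt -/Es -/Ws -/Rm e1 -/K -e2 !mulmxA.
  by rewrite [(Ws *m Rm^T)^T]trmx_mul trmxK WsT !mulmxA.
have n1 : (0 < n.-1)%N by lia.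
have m0 : (0 < n.-1 + k)%N by rewrite addn_gt0 n1.
have Lu : F^T *m F \in unitmx.
  apply: unit_from_inj => v hv.
  have := real_inj hv; rewrite /F -mulmxA => hE.
  have hD : Dt *m v = 0.
    apply: diagf_inj hE => i.
    by rewrite invr_neq0 // gt_eqF // sqrtr_gt0.
  exact: (Dt_inj hn hsimple htree hD).
have Mu : K^T *m K \in unitmx.
  apply: unit_from_inj => v hv.
  have := real_inj hv; rewrite /K -mulmxA => hE.
  have hR : Rm^T *m v = 0.
    apply: diagf_inj hE => i.
    by rewrite gt_eqF // sqrtr_gt0.
  move: hR; rewrite /Rm /Rmat tr_row_mx mul_col_mx trmx1 mul1mx.
  by move=> /eqP; rewrite col_mx_eq0 => /andP [/eqP -> _].
by rewrite e3 e4 (hinf_abs Lu Mu n1 m0).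
Qed.
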